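(* Let $\mathcal{C}$ be a hereditary class of finite simple graphs and let $f:\mathcal{C}\to\mathbb{R}$ be a function satisfying: (1) $f(G)\le |V(G)|$ whenever $G\in\mathcal{C}$ has no edges (i.e. $G$ is a collection of isolated vertices); and, for every $G\in\mathcal{C}$ with at least one edge, there exists a nonempty sequence of vertices $v_1,\dots,v_k$ of $G$ such that, setting $G_0=G$ and $G_i=G-v_1-v_2-\cdots-v_i$ for $0\le i\le k$: (2) $f(G_i-\operatorname{st}_{G_i}v_{i+1})+1\ge f(G)$ for all $0\le i\le k-1$; (3) $f(\overline{G_k})+|\operatorname{is}(G_k)|\ge f(G)$. Then for every graph $G\in\mathcal{C}$, \[\operatorname{pd}(G)\le |V(G)|-f(G).\]
   Context: All graphs are finite and simple. A class $\mathcal{C}$ of graphs is hereditary if $G-x\in\mathcal{C}$ whenever $G\in\mathcal{C}$ and $x$ is a vertex of $G$ (here $G-x$ is the induced subgraph on $V(G)\setminus\{x\}$). For a graph $H$ and a vertex $v$, $\operatorname{st}_H v$ is the induced subgraph of $H$ on $v$ together with its neighbors in $H$, and $H-\operatorname{st}_H v$ denotes $H$ with these vertices deleted. $\operatorname{is}(H)$ is the set of isolated vertices of $H$ and $\overline{H}=H-\operatorname{is}(H)$. For a graph $G$ with vertex set $\{x_1,\dots,x_n\}$ and a fixed field $\mathbf{k}$, let $S=\mathbf{k}[x_1,\dots,x_n]$ and let $I(G)=(x_ix_j : (x_i,x_j)\text{ an edge of }G)$ be the edge ideal; $\operatorname{pd}(G)$ denotes the projective dimension of $S/I(G)$ over $S$.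 *)

(* Defs.v *)
From Stdlib Require Import Reals.
From mathcomp Require Import all_boot all_order all_algebra.
From mathcomp Require Import finmap mpoly.

Set Implicit Arguments.
Unset Strict Implicit.
Unset Printing Implicit Defensive.

Import GRing.Theory.
Local Open Scope fset_scope.

Definition wf_graph (V : {fset nat}) (E : {fset {fset nat}}) : bool :=
  all (fun e : {fset nat} => (#|` e| == 2) && (e `<=` V)) (enum_fset E).

Record graph := Graph {
  gV : {fset nat};
  gE : {fset {fset nat}};
  gwf : wf_graph gV gE }.

Definition adj (G : graph) (u v : nat) : bool := [fset u; v] \in gE G.

Lemma induced_wf (G : graph) (A : {fset nat}) :
  wf_graph (gV G `&` A) [fset e in gE G | e `<=` A].
Proof.
apply/allP => e; rewrite !inE => /andP[eE eA].
have /allP/(_ e) := gwf G; move=> /(_ eE) /andP[-> eV] /=.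
by rewrite fsubsetI eV eA.
Qed.

Definition induced (G : graph) (A : {fset nat}) : graph :=
  Graph (induced_wf G A).

Definition delv (G : graph) (x : nat) : graph := induced G (gV G `\ x).

Definition delseq (G : graph) (vs : seq nat) : graph := foldl delv G vs.

Definition stset (G : graph) (v : nat) : {fset nat} :=
  v |` [fset u in gV G | adj G u v].

Definition delst (G : graph) (v : nat) : graph :=
  induced G (gV G `\` stset G v).

Definition isol (G : graph) : {fset nat} :=
  [fset v in gV G | ~~ has (fun e : {fset nat} => v \in e) (enum_fset (gE G))].

(* \overline{G} = G - is(G) *)
Definition ovl (G : graph) : graph := induced G (gV G `\` isol G).

Definition hereditary (C : graph -> Prop) : Prop :=
  forall (G : graph) (x : nat), C G -> x \in gV G -> C (delv G x).

(* S = k[x_v : v in V(G)], with n = |V(G)| variables; the vertex v gets the   *)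
(* variable 'X_i where i is the position of v in the enumeration of V(G).    *)

Section EdgeIdeal.
Variable k : fieldType.

Definition var (n : nat) (i : nat) : {mpoly k[n]} :=
  if insub i is Some j then 'X_j else 0.

Definition nvars (G : graph) : nat := size (enum_fset (gV G)).

Definition polyring (G : graph) := {mpoly k[nvars G]}.

Definition xv (G : graph) (v : nat) : {mpoly k[nvars G]} :=
  var (nvars G) (index v (enum_fset (gV G))).

Definition edge_gens (G : graph) : seq {mpoly k[nvars G]} :=
  [seq (\prod_(u <- enum_fset e) xv G u)%R | e <- enum_fset (gE G)].

Definition in_ideal (S : comNzRingType) (gs : seq S) (x : S) : Prop :=
  exists c : 'I_(size gs) -> S, x = (\sum_(i < size gs) c i * gs`_i)%R.

(* A finite free resolution of length <= p of S/I, I = ideal generated by gs: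
     0 -> ... -> F_3 --d 1--> F_2 --d 0--> F_1 --d0--> F_0 = S -> S/I -> 0
   with F_{i+1} = S^(b i) (row vectors, maps acting by right multiplication),
   F_{j} = 0 for j > p. *)
Definition free_resolution (S : comNzRingType) (gs : seq S) (p : nat) : Prop :=
  exists (b : nat -> nat) (d0 : 'M[S]_(b 0, 1))
         (d : forall i : nat, 'M[S]_(b i.+1, b i)),
  [/\ (* coker d0 = S/I, i.e. im d0 = I *)
      forall y : 'rV[S]_1, in_ideal gs (y ord0 ord0) <-> exists u, (u *m d0)%R = y,
      forall u : 'rV[S]_(b 0), (u *m d0 = 0)%R <-> exists w, (w *m d 0)%R = u,
      forall (i : nat) (u : 'rV[S]_(b i.+1)),
        (u *m d i = 0)%R <-> exists w, (w *m d i.+1)%R = u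
    &
      forall i : nat, (p <= i)%N -> b i = 0%N].

Definition pd_le (G : graph) (x : R) : Prop :=
  exists p : nat, free_resolution (edge_gens G) p /\ Rle (INR p) x.

End EdgeIdeal.

(* Main.v *)
Require Import Defs.
From Stdlib Require Import Reals.
From mathcomp Require Import all_boot all_order all_algebra.
From mathcomp Require Import finmap mpoly.
From Stdlib Require Import ClassicalEpsilon Lra.
From mathcomp Require Import zify.
Set Implicit Arguments. Unset Strict Implicit. Unset Printing Implicit Defensive.
Module SubPart0.
Import GRing.Theory.
Local Open Scope ring_scope.

Section IdealLemmas.
Variable S : comNzRingType.
Implicit Types gs hs : seq S.

Lemma in_ideal0 gs : in_ideal gs 0.
Proof. by exists (fun _ => 0); rewrite big1 // => i _; rewrite mul0r. Qed.

Lemma in_idealD gs x y : in_ideal gs x -> in_ideal gs y -> in_ideal gs (x + y).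
Proof.
case=> c1 ->; case=> c2 ->; exists (fun i => c1 i + c2 i).
by rewrite -big_split /=; apply: eq_bigr => i _; rewrite mulrDl.
Qed.

Lemma in_idealM gs a x : in_ideal gs x -> in_ideal gs (a * x).
Proof.
case=> c ->; exists (fun i => a * c i).
by rewrite mulr_sumr; apply: eq_bigr => i _; rewrite mulrA.
Qed.

Lemma in_idealMr gs a x : in_ideal gs x -> in_ideal gs (x * a).
Proof. by move=> h; rewrite mulrC; apply: in_idealM. Qed.

Lemma in_idealN gs x : in_ideal gs x -> in_ideal gs (- x).
Proof. by move=> h; rewrite -mulN1r; apply: in_idealM. Qed.

Lemma in_idealB gs x y : in_ideal gs x -> in_ideal gs y -> in_ideal gs (x - y).
Proof. by move=> hx hy; apply: in_idealD => //; apply: in_idealN. Qed.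

Lemma in_ideal_sum gs (I : eqType) (r : seq I) (F : I -> S) :
  (forall i, i \in r -> in_ideal gs (F i)) -> in_ideal gs (\sum_(i <- r) F i).
Proof.
elim: r => [|a r IH] h; first by rewrite big_nil; apply: in_ideal0.
rewrite big_cons; apply: in_idealD; first by apply: h; rewrite inE eqxx.
by apply: IH => i hi; apply: h; rewrite inE hi orbT.
Qed.

Lemma in_ideal_sumI gs (n : nat) (F : 'I_n -> S) :
  (forall i, in_ideal gs (F i)) -> in_ideal gs (\sum_(i < n) F i).
Proof. by move=> h; apply: in_ideal_sum => i _; apply: h. Qed.

Lemma in_ideal_gen gs g : g \in gs -> in_ideal gs g.
Proof.
move=> hg; have hj : (index g gs < size gs)%N by rewrite index_mem.
exists (fun i => ((i : nat) == index g gs)%:R).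
rewrite (bigD1 (Ordinal hj)) //= eqxx mul1r nth_index // big1 ?addr0 //.
by move=> i /negbTE; rewrite -val_eqE /= => ->; rewrite mul0r.
Qed.

Lemma in_ideal_sub gs hs x :
  (forall g, g \in gs -> in_ideal hs g) -> in_ideal gs x -> in_ideal hs x.
Proof.
move=> h [c ->]; apply: in_ideal_sumI => i; apply: in_idealM; apply: h.
by apply: mem_nth.
Qed.

Lemma in_ideal_nil (x : S) : @in_ideal S [::] x <-> x = 0.
Proof.
split; first by case=> c ->; rewrite big_ord0.
by move=> ->; apply: in_ideal0.
Qed.

End IdealLemmas.

Section Mono.
Variables (n : nat) (R : idomainType).
Implicit Types (ms : seq 'X_{1..n}) (y : {mpoly R[n]}).

Definition mgens ms : seq {mpoly R[n]} := [seq 'X_[m] | m <- ms].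

Lemma mcoeffMX0 (p : {mpoly R[n]}) m k : ~~ (m <= k)%MM -> (p * 'X_[m])@_k = 0.
Proof.
move=> hk; apply/eqP; rewrite mcoeff_eq0 (perm_mem (msuppMX p m)).
apply/negP => /mapP [m' _ e]; move: hk; rewrite e.
by rewrite lem_addr.
Qed.

Lemma mono_ideal_supp ms y : in_ideal (mgens ms) y ->
  forall mm, mm \in msupp y -> exists2 m, m \in ms & (m <= mm)%MM.
Proof.
case=> c -> mm; rewrite mcoeff_msupp raddf_sum /= => hne.
case: (pickP (fun i : 'I_(size (mgens ms)) => (c i * (mgens ms)`_i)@_mm != 0)) => [i hi|h]; last first.
  by move: hne; rewrite big1 ?eqxx // => i _; move: (h i) => /= /negbFE/eqP.
have hi' : (i < size ms)%N by rewrite -(size_map (fun m => ('X_[m] : {mpoly R[n]}))) ltn_ord.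
exists (nth 0%MM ms i); first by apply: mem_nth.
move: hi; rewrite (nth_map 0%MM) //; apply: contraNT => hle.
by apply/eqP; apply: mcoeffMX0.
Qed.

Lemma mono_ideal_suppR ms y :
  (forall mm, mm \in msupp y -> exists2 m, m \in ms & (m <= mm)%MM) ->
  in_ideal (mgens ms) y.
Proof.
move=> h; rewrite (mpolyE y); apply: in_ideal_sum => mm hmm.
case: (h mm hmm) => m hm hle.
rewrite -(submK hle) mpolyXD scalerAl; apply: in_idealM.
apply: in_ideal_gen; apply/mapP; exists m => //.
Qed.

Lemma mono_regular ms (j : 'I_n) y :
  all (fun m : 'X_{1..n} => m j == 0%N) ms ->
  in_ideal (mgens ms) ('X_j * y) -> in_ideal (mgens ms) y.
Proof.
move=> hall hin; apply: mono_ideal_suppR => mm hmm.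
have hs : (U_(j) + mm)%MM \in msupp ('X_j * y).
  by rewrite mcoeff_msupp mulrC mcoeffMX -mcoeff_msupp.
case: (mono_ideal_supp hin hs) => m hm hle; exists m => //.
apply/mnm_lepP => i; have := mnm_lepP hle i; rewrite mnmDE mnm1E.
case: (eqVneq j i) => [<-|_]; last by rewrite add0n.
by move/allP: hall => /(_ m hm) /eqP ->.
Qed.
End Mono.

End SubPart0.
Import SubPart0.

Module SubPart1.
Import GRing.Theory.
Local Open Scope ring_scope.


Definition fres (S : comNzRingType) (I : S -> Prop) (p : nat) : Prop :=
  exists (b : nat -> nat) (d0 : 'M[S]_(b 0, 1))
         (d : forall i : nat, 'M[S]_(b i.+1, b i)),
  [/\ forall y : 'rV[S]_1, I (y ord0 ord0) <-> exists u, (u *m d0)%R = y,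
      forall u : 'rV[S]_(b 0), (u *m d0 = 0)%R <-> exists w, (w *m d 0)%R = u,
      forall (i : nat) (u : 'rV[S]_(b i.+1)),
        (u *m d i = 0)%R <-> exists w, (w *m d i.+1)%R = u
    & forall i : nat, (p <= i)%N -> b i = 0%N].

Lemma fresE (S : comNzRingType) (gs : seq S) p :
  free_resolution gs p <-> fres (in_ideal gs) p.
Proof. by []. Qed.

Lemma fres_ext (S : comNzRingType) (I J : S -> Prop) p :
  (forall y, I y <-> J y) -> fres I p -> fres J p.
Proof.
move=> hIJ [b [d0 [d [h1 h2 h3 h4]]]]; exists b, d0, d; split => //.
by move=> y; rewrite -h1 hIJ.
Qed.

Lemma fres_mono (S : comNzRingType) (I : S -> Prop) p p' :
  (p <= p')%N -> fres I p -> fres I p'.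
Proof.
move=> hp [b [d0 [d [h1 h2 h3 h4]]]]; exists b, d0, d; split => //.
by move=> i hi; apply: h4; apply: leq_trans hi.
Qed.

Lemma lift_rows (S : comNzRingType) r s m (M : 'M[S]_(r, m)) (E : 'M[S]_(s, m)) :
  (forall i, exists w : 'rV_s, w *m E = row i M) -> exists W, W *m E = M.
Proof.
move=> h; have [f hf] := fin_all_exists h.
exists (\matrix_i f i); apply/row_matrixP => i.
by rewrite row_mul rowK hf.
Qed.

Section Cone.
Variable S : idomainType.
Variables (a c : nat -> nat) (p : 'M[S]_(a 0, 1)) (q : 'M[S]_(c 0, 1)).
Variables (D : forall i, 'M[S]_(a i.+1, a i)) (E : forall i, 'M[S]_(c i.+1, c i)).
Variables (Psi : forall i, 'M[S]_(a i, c i)) (x : S).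
Hypothesis hPsi0 : Psi 0 *m q = p.
Hypothesis hPsi : forall i, Psi i.+1 *m E i = D i *m Psi i.
Hypothesis exP0 : forall u : 'rV_(a 0), u *m p = 0 <-> exists w, w *m D 0 = u.
Hypothesis exP : forall i (u : 'rV_(a i.+1)), u *m D i = 0 <-> exists w, w *m D i.+1 = u.
Hypothesis exQ0 : forall u : 'rV_(c 0), u *m q = 0 <-> exists w, w *m E 0 = u.
Hypothesis exQ : forall i (u : 'rV_(c i.+1)), u *m E i = 0 <-> exists w, w *m E i.+1 = u.
Hypothesis hx : x != 0.
Hypothesis hreg : forall y : 'rV[S]_1,
  (exists u, u *m p = x *: y) -> exists u, u *m p = y.

Definition sg (n : nat) : S := (-1) ^+ n.

Definition h (n : nat) : nat :=
  match n with 0 => (a 0 + c 0)%N | n'.+1 => (a n'.+1 + c n'.+1 + a n')%N end.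

Definition dHc : 'M[S]_(h 0, 1) := col_mx p (x *: q).

Definition dH (i : nat) : 'M[S]_(h i.+1, h i) :=
  match i as i0 return 'M[S]_(h i0.+1, h i0) with
  | 0 => col_mx (col_mx (row_mx (D 0) 0) (row_mx 0 (E 0)))
                (row_mx (x *: 1%:M) (- Psi 0))
  | n.+1 => col_mx (col_mx (row_mx (row_mx (D n.+1) 0) 0)
                           (row_mx (row_mx 0 (E n.+1)) 0))
                   (row_mx (row_mx ((sg n.+1 * x) *: 1%:M) (- (sg n.+1 *: Psi n.+1))) (D n))
  end.

Lemma dHcE (al : 'rV_(a 0)) (be : 'rV_(c 0)) :
  row_mx al be *m dHc = al *m p + x *: (be *m q).
Proof. by rewrite /dHc mul_row_col scalemxAr. Qed.

Lemma dH0E (al : 'rV_(a 1)) (be : 'rV_(c 1)) (ga : 'rV_(a 0)) :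
  row_mx (row_mx al be) ga *m dH 0 =
  row_mx (al *m D 0 + x *: ga) (be *m E 0 - ga *m Psi 0).
Proof.
rewrite /= !mul_row_col !mul_mx_row !mulmx0 add_row_mx addr0 add0r add_row_mx.
by rewrite -scalemxAr mulmx1 mulmxN.
Qed.

Lemma dHSE n (al : 'rV_(a n.+2)) (be : 'rV_(c n.+2)) (ga : 'rV_(a n.+1)) :
  row_mx (row_mx al be) ga *m dH n.+1 =
  row_mx (row_mx (al *m D n.+1 + (sg n.+1 * x) *: ga)
                 (be *m E n.+1 - sg n.+1 *: (ga *m Psi n.+1))) (ga *m D n).
Proof.
rewrite /= !mul_row_col !mul_mx_row !mulmx0 !add_row_mx !addr0 !add0r.
by rewrite -scalemxAr mulmx1 mulmxN scalemxAr.
Qed.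

Lemma P0 (w : 'rV_(a 1)) : w *m D 0 *m p = 0.
Proof. by apply/exP0; exists w. Qed.
Lemma PS i (w : 'rV_(a i.+2)) : w *m D i.+1 *m D i = 0.
Proof. by apply/exP; exists w. Qed.
Lemma Q0 (w : 'rV_(c 1)) : w *m E 0 *m q = 0.
Proof. by apply/exQ0; exists w. Qed.
Lemma QS i (w : 'rV_(c i.+2)) : w *m E i.+1 *m E i = 0.
Proof. by apply/exQ; exists w. Qed.


Lemma ex_H0 (u : 'rV_(h 0)) : u *m dHc = 0 <-> exists w, w *m dH 0 = u.
Proof.
rewrite -(hsubmxK u); move: (lsubmx u) (rsubmx u) => al be; rewrite dHcE; split.
  move=> e0.
  have [ga0 hga0] : exists u, u *m p = be *m q.
    apply: hreg; exists (- al); rewrite mulNmx; apply/eqP.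
    by rewrite eq_sym -addr_eq0 addrC e0.
  have [be' hbe'] : exists w, w *m E 0 = be - ga0 *m Psi 0.
    by apply/exQ0; rewrite mulmxBl -mulmxA hPsi0 hga0 subrr.
  have [al' hal'] : exists w, w *m D 0 = al + x *: ga0.
    by apply/exP0; rewrite mulmxDl -scalemxAl hga0.
  exists (row_mx (row_mx al' be') (- ga0)); rewrite dH0E hal' hbe' mulNmx.
  by rewrite scalerN addrK opprK subrK.
case=> w hw; rewrite -dHcE -hw -(hsubmxK w) -(hsubmxK (lsubmx w)); clear al be hw.
move: (lsubmx (lsubmx w)) (rsubmx (lsubmx w)) (rsubmx w) => al be ga.
rewrite dH0E dHcE mulmxDl mulmxBl P0 Q0 -!scalemxAl -mulmxA hPsi0 add0r sub0r.
by rewrite scalerN addrN.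
Qed.

Lemma ex_H1 (u : 'rV_(h 1)) : u *m dH 0 = 0 <-> exists w, w *m dH 1 = u.
Proof.
rewrite -(hsubmxK u) -(hsubmxK (lsubmx u)).
move: (lsubmx (lsubmx u)) (rsubmx (lsubmx u)) (rsubmx u) => al be ga.
rewrite dH0E; split.
  move/eqP; rewrite -row_mx0 => /eqP /eq_row_mx [e1 e2].
  have gp : ga *m p = 0.
    have h0 : x *: (ga *m p) = 0.
      rewrite scalemxAl; have -> : x *: ga = - (al *m D 0).
        by apply/eqP; rewrite -addr_eq0 addrC e1.
      by rewrite mulNmx P0 oppr0.
    by move/eqP: h0; rewrite scalemx_eq0 (negbTE hx) => /eqP.
  have [ga' hga'] := (proj1 (exP0 ga) gp).
  have [al' hal'] : exists w, w *m D 1 = al + x *: ga'.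
    by apply/exP; rewrite mulmxDl -scalemxAl hga' e1.
  have [be' hbe'] : exists w, w *m E 1 = be - ga' *m Psi 1.
    apply/exQ; rewrite mulmxBl -mulmxA hPsi mulmxA hga'.
    by apply/eqP; rewrite subr_eq0 -subr_eq0 e2.
  exists (row_mx (row_mx al' be') ga'); rewrite dHSE hal' hbe' hga' /sg expr1.
  by rewrite mulN1r scaleNr addrK scaleN1r opprK subrK.
case=> w hw; rewrite -dH0E -hw -(hsubmxK w) -(hsubmxK (lsubmx w)); clear al be ga hw.
move: (lsubmx (lsubmx w)) (rsubmx (lsubmx w)) (rsubmx w) => al be ga.
rewrite dHSE dH0E mulmxDl PS add0r -scalemxAl /sg expr1 mulN1r scaleNr addNr.
rewrite mulmxBl QS sub0r -scalemxAl -[ga *m Psi 1 *m E 0]mulmxA hPsi mulmxA scaleN1r opprK subrr.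
by rewrite row_mx0.
Qed.

Lemma ex_HS n (u : 'rV_(h n.+2)) : u *m dH n.+1 = 0 <-> exists w, w *m dH n.+2 = u.
Proof.
rewrite -(hsubmxK u) -(hsubmxK (lsubmx u)).
move: (lsubmx (lsubmx u)) (rsubmx (lsubmx u)) (rsubmx u) => al be ga.
rewrite dHSE; split.
  move/eqP; rewrite -row_mx0 => /eqP /eq_row_mx [/eqP]; rewrite -row_mx0.
  move=> /eqP /eq_row_mx [e1 e2] e3.
  have [ga' hga'] := (proj1 (exP ga) e3).
  have [al' hal'] : exists w, w *m D n.+2 = al + (sg n.+1 * x) *: ga'.
    by apply/exP; rewrite mulmxDl -scalemxAl hga' e1.
  have [be' hbe'] : exists w, w *m E n.+2 = be - sg n.+1 *: (ga' *m Psi n.+2).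
    apply/exQ; rewrite mulmxBl -scalemxAl -mulmxA hPsi mulmxA hga'.
    exact: e2.
  exists (row_mx (row_mx al' be') ga'); rewrite dHSE hal' hbe' hga'.
  have -> : sg n.+2 = - sg n.+1 by rewrite /sg exprS mulN1r.
  by rewrite mulNr scaleNr addrK scaleNr opprK subrK.
case=> w hw; rewrite -dHSE -hw -(hsubmxK w) -(hsubmxK (lsubmx w)); clear al be ga hw.
move: (lsubmx (lsubmx w)) (rsubmx (lsubmx w)) (rsubmx w) => al be ga.
have esg : sg n.+2 = - sg n.+1 by rewrite /sg exprS mulN1r.
rewrite !dHSE esg mulmxDl PS add0r -scalemxAl mulmxBl QS sub0r mulNr scaleNr addNr PS.
rewrite -scalemxAl -[ga *m Psi n.+2 *m E n.+1]mulmxA hPsi mulmxA scaleNr opprK subrr.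
by rewrite !row_mx0.
Qed.

Lemma ex_H i (u : 'rV_(h i.+1)) : u *m dH i = 0 <-> exists w, w *m dH i.+1 = u.
Proof. by case: i u => [|n] u; [apply: ex_H1 | apply: ex_HS]. Qed.

Lemma coker_H (IP IQ IH : S -> Prop) :
  (forall y : 'rV_1, IP (y ord0 ord0) <-> exists u, u *m p = y) ->
  (forall y : 'rV_1, IQ (y ord0 ord0) <-> exists u, u *m q = y) ->
  (forall y, IH y <-> exists a b, IP a /\ IQ b /\ y = a + x * b) ->
  forall y : 'rV_1, IH (y ord0 ord0) <-> exists u, u *m dHc = y.
Proof.
move=> cP cQ cH y; rewrite cH; split.
  case=> a0 [b0 [ha [hb e]]].
  have [al hal] : exists u, u *m p = a0%:M by apply/cP; rewrite mxE eqxx.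
  have [be hbe] : exists u, u *m q = b0%:M by apply/cQ; rewrite mxE eqxx.
  exists (row_mx al be); rewrite dHcE hal hbe scale_scalar_mx -(raddfD (@scalar_mx _ 1)) -e.
  by rewrite [RHS]mx11_scalar.
case=> u <-; rewrite -(hsubmxK u); move: (lsubmx u) (rsubmx u) => al be.
exists ((al *m p) ord0 ord0), ((be *m q) ord0 ord0).
split; first by apply/cP; exists al.
split; first by apply/cQ; exists be.
by rewrite dHcE !mxE.
Qed.

End Cone.


Section ConeThm.
Variable S : idomainType.

Theorem cone_fres (IP IQ IH : S -> Prop) (x : S) pP pQ :
  x != 0 -> (forall y, IP y -> IQ y) -> (forall y, IP (x * y) -> IP y) ->
  (forall y, IH y <-> exists a b, IP a /\ IQ b /\ y = a + x * b) ->
  fres IP pP -> fres IQ pQ -> fres IH (maxn pP.+1 pQ).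
Proof.
move=> hx hPQ hr hH [a [p [D [cP exP0 exP lP]]]] [c [q [E [cQ exQ0 exQ lQ]]]].
have [Psi0 hPsi0] : exists W, W *m q = p.
  apply: lift_rows => i; apply/cQ; apply: hPQ; apply/cP; by exists (row i 1%:M); rewrite -row_mul mul1mx.
have [Psi1 hPsi1] : exists W, W *m E 0 = D 0 *m Psi0.
  apply: lift_rows => i; apply/exQ0; rewrite -row_mul -mulmxA hPsi0 row_mul.
  by apply/exP0; exists (row i 1%:M); rewrite -row_mul mul1mx.
have step : forall n (A : 'M[S]_(a n, c n)) (B : 'M[S]_(a n.+1, c n.+1)),
    B *m E n = D n *m A -> exists C : 'M[S]_(a n.+2, c n.+2), C *m E n.+1 = D n.+1 *m B.
  move=> n A B hB; apply: lift_rows => i; apply/exQ; rewrite -row_mul -mulmxA hB.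
  rewrite mulmxA !row_mul; have -> : row i (D n.+1) *m D n = 0.
    by apply/exP; exists (row i 1%:M); rewrite -row_mul mul1mx.
  by rewrite mul0mx.
pose T n := {AB : 'M[S]_(a n, c n) * 'M[S]_(a n.+1, c n.+1) | AB.2 *m E n = D n *m AB.1}.
pose F := fix F n : T n := match n as n0 return T n0 with
  | 0 => exist _ (Psi0, Psi1) hPsi1
  | n'.+1 => let AB := F n' in
     let C := constructive_indefinite_description _ (step n' _ _ (svalP AB)) in
     exist _ ((sval AB).2, sval C) (svalP C)
  end.
pose Psi n := (sval (F n)).1.
have hPsi0' : Psi 0 *m q = p by [].
have hPsi : forall i, Psi i.+1 *m E i = D i *m Psi i.
  by move=> i; rewrite /Psi /=; apply: (svalP (F i)).
have hreg : forall y : 'rV[S]_1, (exists u, u *m p = x *: y) -> exists u, u *m p = y.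
  move=> y /cP; rewrite mxE => /hr; exact: (proj1 (cP y)).
exists (h a c), (dHc p q x), (dH D E Psi x); split.
- exact: (coker_H cP cQ hH).
- exact: (ex_H0 hPsi0' exP0 exQ0 hreg).
- exact: (ex_H hPsi exP0 exP exQ hx).
move=> [|n] hn; first by move: hn; rewrite geq_max ltn0.
move: hn; rewrite geq_max => /andP [h1 h2] /=.
by rewrite lP 1?lQ 1?lP //; apply: ltnW.
Qed.
End ConeThm.

End SubPart1.
Import SubPart1.

Module SubPart2.
Import GRing.Theory.
Local Open Scope ring_scope.

Lemma fres_zero (S : comNzRingType) : fres (fun y : S => y = 0) 0.
Proof.
exists (fun _ => 0%N), 0, (fun _ => 0); split => //.
- move=> y; split; first by move=> h; exists 0; rewrite mul0mx; apply/matrixP => i j; rewrite !ord1 mxE h.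
  by case=> u <-; rewrite mulmx0 mxE.
- by move=> u; split => _; [exists 0; apply/matrixP => ? [] | rewrite mulmx0].
- by move=> i u; split => _; [exists 0; apply/matrixP => ? [] | rewrite mulmx0].
Qed.

Lemma fres_unit (S : comNzRingType) : fres (fun y : S => True) 1.
Proof.
exists (fun i => if i is 0 then 1%N else 0%N), 1%:M, (fun _ => 0); split => //.
- by move=> y; split => // _; exists y; rewrite mulmx1.
- move=> u; rewrite mulmx1; split; first by move=> ->; exists 0; rewrite mul0mx.
  by case=> w <-; rewrite mulmx0.
- by move=> i u; split => _; [exists 0; apply/matrixP => ? [] | rewrite mulmx0].
- by case.
Qed.

Lemma in_ideal_rcons (S : comNzRingType) (gs : seq S) (x y : S) :
  in_ideal (rcons gs x) y <-> exists a b, in_ideal gs a /\ y = a + x * b.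
Proof.
split.
  case=> c ->; move: c; rewrite size_rcons => c.
  rewrite big_ord_recr /=; exists (\sum_(i < size gs) c (widen_ord (leqnSn _) i) * (rcons gs x)`_i).
  exists (c ord_max); split; last by rewrite nth_rcons ltnn eqxx mulrC.
  exists (fun i => c (widen_ord (leqnSn _) i)); apply: eq_bigr => i _.
  by rewrite nth_rcons /= ltn_ord.
case=> a [b [ha ->]]; apply: in_idealD.
  by apply: (in_ideal_sub _ ha) => g hg; apply: in_ideal_gen; rewrite mem_rcons inE hg orbT.
by apply: in_idealMr; apply: in_ideal_gen; rewrite mem_rcons mem_head.
Qed.

Lemma fres_addx (S : idomainType) (gs : seq S) (x : S) p :
  x != 0 -> (forall y, in_ideal gs (x * y) -> in_ideal gs y) ->
  fres (in_ideal gs) p -> fres (in_ideal (rcons gs x)) p.+1.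
Proof.
move=> hx hr hP; have := cone_fres hx (fun y _ => I) hr _ hP (fres_unit S).
rewrite (maxn_idPl _) //; apply => y; rewrite in_ideal_rcons; split.
  by case=> a [b [h1 h2]]; exists a, b.
by case=> a [b [h1 [_ h2]]]; exists a, b.
Qed.

Section Gens.
Variables (k : fieldType) (N : nat) (phi : nat -> nat).
Local Notation S := {mpoly k[N]}.

Definition pgens (ss : seq (seq nat)) : seq S :=
  [seq (\prod_(u <- s) var k N (phi u))%R | s <- ss].

Definition vmono (i : nat) : 'X_{1..N} :=
  if insub i is Some j then U_(j)%MM else 0%MM.

Lemma var_mono i : (i < N)%N -> var k N i = 'X_[vmono i].
Proof. by move=> hi; rewrite /var /vmono insubT. Qed.

Definition smono (s : seq nat) : 'X_{1..N} := (\sum_(u <- s) vmono (phi u))%MM.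

Lemma prod_mono s : (forall u, u \in s -> phi u < N)%N ->
  \prod_(u <- s) var k N (phi u) = 'X_[smono s].
Proof.
rewrite /smono; elim: s => [|u s IH] h; first by rewrite !big_nil mpolyX0.
rewrite !big_cons mpolyXD var_mono ?IH //; first by move=> w hw; apply: h; rewrite inE hw orbT.
by apply: h; rewrite mem_head.
Qed.

Lemma smono_j s (j : 'I_N) : (forall u, u \in s -> phi u != j) -> smono s j = 0%N.
Proof.
rewrite /smono; elim: s => [|u s IH] h; first by rewrite big_nil mnm0E.
rewrite big_cons mnmDE IH; last by move=> w hw; apply: h; rewrite inE hw orbT.
rewrite addn0 /vmono; case: insubP => [i _ hi|_]; last by rewrite mnm0E.
rewrite mnm1E; case: eqP => // e; move: (h u (mem_head _ _)).
by rewrite -hi e eqxx.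
Qed.

Lemma pgens_mono (ss : seq (seq nat)) : (forall s u, s \in ss -> u \in s -> phi u < N)%N ->
  pgens ss = @mgens N k [seq smono s | s <- ss].
Proof.
move=> h; rewrite /pgens /mgens -map_comp; apply/eq_in_map => s hs /=.
by apply: prod_mono => u hu; apply: h hs hu.
Qed.

Lemma prod_regular (ss : seq (seq nat)) v (y : S) :
  (forall s u, s \in ss -> u \in s -> phi u < N)%N -> (phi v < N)%N ->
  (forall s u, s \in ss -> u \in s -> phi u != phi v) ->
  in_ideal (pgens ss) (var k N (phi v) * y) -> in_ideal (pgens ss) y.
Proof.
move=> h hv hne; rewrite pgens_mono // /var insubT => /= hin.
apply: (mono_regular (j := Ordinal hv)) hin; apply/allP => m /mapP [s hs ->].
by apply/eqP; apply: smono_j => u hu; apply: hne hs hu.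
Qed.

Lemma var_neq0 i : (i < N)%N -> var k N i != 0.
Proof.
move=> hi; rewrite var_mono //; apply/eqP => /(congr1 (mcoeff (vmono i))).
by rewrite mcoeffX eqxx mcoeff0 => /eqP; rewrite oner_eq0.
Qed.

Lemma add_var (ss : seq (seq nat)) u p :
  (forall s w, s \in ss -> w \in s -> phi w < N)%N -> (phi u < N)%N ->
  (forall s w, s \in ss -> w \in s -> phi w != phi u) ->
  fres (in_ideal (pgens ss)) p -> fres (in_ideal (pgens (rcons ss [:: u]))) p.+1.
Proof.
move=> h hu hne hP; rewrite /pgens map_rcons big_seq1.
apply: fres_addx => //; first exact: var_neq0.
by move=> y; apply: prod_regular.
Qed.

Lemma add_vars (us : seq nat) (ss : seq (seq nat)) p :
  (forall s w, s \in ss -> w \in s -> phi w < N)%N -> (forall u, u \in us -> phi u < N)%N ->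
  (forall s w u, s \in ss -> w \in s -> u \in us -> phi w != phi u) ->
  uniq [seq phi u | u <- us] ->
  fres (in_ideal (pgens ss)) p ->
  fres (in_ideal (pgens (ss ++ [seq [:: u] | u <- us]))) (p + size us).
Proof.
elim: us ss p => [|u us IH] ss p h hus hne huq hP; first by rewrite cats0 addn0.
rewrite /= -cat_rcons addnS -addSn; apply: IH.
- move=> s w; rewrite mem_rcons inE => /orP [/eqP -> | hs]; last exact: h.
  by rewrite inE => /eqP ->; apply: hus; rewrite mem_head.
- by move=> w hw; apply: hus; rewrite inE hw orbT.
- move=> s w u'; rewrite mem_rcons inE => /orP [/eqP -> | hs] hw hu'.
    move: hw; rewrite inE => /eqP ->; move: huq => /= /andP [hn _].
    by apply/eqP => e; move: hn; rewrite e map_f.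
  by apply: hne hs hw _; rewrite inE hu' orbT.
- by case/andP: huq.
apply: add_var => //; first by apply: hus; rewrite mem_head.
by move=> s w hs hw; apply: hne hs hw _; rewrite mem_head.
Qed.

End Gens.

End SubPart2.
Import SubPart2.

Module SubPart3.
Local Open Scope fset_scope.

Definition nbr (H : graph) (v : nat) : {fset nat} := [fset u in gV H | adj H u v].

Lemma edge_wf (G : graph) e : e \in gE G -> #|` e| = 2 /\ e `<=` gV G.
Proof.
move=> he; have /allP /(_ e he) /andP [/eqP h1 h2] := gwf G; by [].
Qed.

Lemma edge_vert (G : graph) e u : e \in gE G -> u \in e -> u \in gV G.
Proof. by move=> /edge_wf [_ /fsubsetP h] /h. Qed.

Lemma graph_eq (G1 G2 : graph) : gV G1 = gV G2 -> gE G1 = gE G2 -> G1 = G2.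
Proof.
case: G1 => V1 E1 w1; case: G2 => V2 E2 w2 /= e1 e2; subst.
by rewrite (bool_irrelevance w1 w2).
Qed.

Lemma gE_ind (G : graph) A e : (e \in gE (induced G A)) = (e \in gE G) && (e `<=` A).
Proof. by rewrite /= inE. Qed.

Lemma gV_ind (G : graph) A u : (u \in gV (induced G A)) = (u \in gV G) && (u \in A).
Proof. by rewrite /= inE. Qed.

Lemma hered_ind (C : graph -> Prop) (G : graph) (A : {fset nat}) :
  hereditary C -> C G -> C (induced G A).
Proof.
move=> hC; move: {2}(#|` gV G `\` A|) (leqnn #|` gV G `\` A|) => n.
elim: n G => [|n IH] G hn hG.
  have hsub : gV G `<=` A by rewrite -fsetD_eq0 -cardfs_eq0 -leqn0.
  suff -> : induced G A = G by [].
  apply: graph_eq; apply/fsetP => x; rewrite ?gV_ind ?gE_ind.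
    by case hx: (x \in gV G) => //=; apply: (fsubsetP hsub).
  case hx: (x \in gE G) => //=; apply: fsubset_trans hsub.
  by case: (edge_wf hx).
case: (boolP (gV G `<=` A)) => hsub.
  suff -> : induced G A = G by [].
  apply: graph_eq; apply/fsetP => x; rewrite ?gV_ind ?gE_ind.
    by case hx: (x \in gV G) => //=; apply: (fsubsetP hsub).
  case hx: (x \in gE G) => //=; apply: fsubset_trans hsub.
  by case: (edge_wf hx).
case/fsubsetPn: hsub => x hxV hxA.
have -> : induced G A = induced (delv G x) A.
  apply: graph_eq; apply/fsetP => y.
    rewrite /delv /= !inE; case: (eqVneq y x) => [->|] //=.
      by rewrite (negbTE hxA) !andbF.
    by rewrite andbb.
  rewrite /delv /= !inE; case hy: (y \in gE G) => //=.
  case hyA: (y `<=` A); rewrite ?andbF //= andbT.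
  symmetry; apply/fsubsetP => z hz; rewrite !inE (edge_vert hy hz) andbT.
  by apply: contraNneq hxA => <-; apply: (fsubsetP (idP hyA)).
apply: IH; last by apply: hC.
rewrite -ltnS; apply: leq_trans hn; rewrite (cardfsD1 x (gV G `\` A)).
rewrite in_fsetD hxA hxV add1n ltnS; apply: fsubset_leq_card.
by apply/fsubsetP => y; rewrite /delv /= !inE => /and4P [-> -> -> _].
Qed.

Lemma gV_sub (G : graph) A : gV (induced G A) `<=` gV G.
Proof. by apply/fsubsetP => u; rewrite gV_ind => /andP []. Qed.

Lemma gV_delv (H : graph) v u : (u \in gV (delv H v)) = (u != v) && (u \in gV H).
Proof. by rewrite /delv gV_ind !inE; case: (u \in gV H); rewrite ?andbT ?andbF. Qed.

Lemma gE_delv (H : graph) v e : (e \in gE (delv H v)) = (e \in gE H) && (v \notin e).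
Proof.
rewrite /delv gE_ind; case he: (e \in gE H) => //=.
apply/fsubsetP/idP => [h|hv u hu]; first by apply/negP => /h; rewrite !inE eqxx.
by rewrite !inE (edge_vert he hu) andbT; apply: contraNneq hv => <-.
Qed.

Lemma card_delv (H : graph) v : v \in gV H -> (#|` gV (delv H v)|).+1 = #|` gV H|.
Proof.
move=> hv; rewrite [RHS](cardfsD1 v) hv add1n; congr _.+1; congr #|` _|.
by apply/fsetP => u; rewrite gV_delv !inE.
Qed.

Lemma delseq_cons (G : graph) x s : delseq G (x :: s) = delseq (delv G x) s.
Proof. by []. Qed.

Lemma gV_delseq (G : graph) s u : (u \in gV (delseq G s)) = (u \notin s) && (u \in gV G).
Proof.
elim: s G => [|x s IH] G; first by [].
by rewrite delseq_cons IH gV_delv inE negb_or; case: (u \notin s); case: (u != x).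
Qed.

Lemma gE_delseq (G : graph) s e : e \in gE (delseq G s) -> e \in gE G.
Proof.
elim: s G => [|x s IH] G //; rewrite delseq_cons => /IH.
by rewrite gE_delv => /andP [].
Qed.

Lemma card_delseq (G : graph) s : uniq s -> all (fun v => v \in gV G) s ->
  (#|` gV (delseq G s)| + size s)%N = #|` gV G|.
Proof.
elim: s G => [|x s IH] G; first by rewrite addn0.
move=> /andP [hx hu] /andP [hxV hs]; rewrite delseq_cons [size _]/= addnS IH ?card_delv //.
apply/allP => y hy; rewrite gV_delv (allP hs y hy) andbT.
by apply: contraNneq hx => <-.
Qed.

Lemma hered_delseq (C : graph -> Prop) (G : graph) s :
  hereditary C -> C G -> C (delseq G s).
Proof.
move=> hC; elim: s G => [|x s IH] G hG //; rewrite delseq_cons; apply: IH.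
exact: hered_ind.
Qed.

Lemma adj_neq (H : graph) u v : adj H u v -> u != v.
Proof.
by move=> /edge_wf [h _]; apply: contra_eqN h => /eqP ->; rewrite fsetUid cardfs1.
Qed.

Lemma nbr_sub (H : graph) v : nbr H v `<=` gV H `\ v.
Proof.
apply/fsubsetP => u; rewrite !inE => /andP [hu ha]; rewrite hu andbT.
exact: adj_neq ha.
Qed.

Lemma nbr_edge (H : graph) v u : u \in nbr H v -> [fset v; u] \in gE H.
Proof. by rewrite !inE => /andP [_]; rewrite /adj fsetUC. Qed.

Lemma edge_nbr (H : graph) v e : e \in gE H -> v \in e ->
  exists2 u, u \in nbr H v & e = [fset v; u].
Proof.
move=> he hv; have [h2 _] := edge_wf he.
have : #|` e `\ v| == 1 by move: h2; rewrite (cardfsD1 v) hv add1n => -[->].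
case/cardfs1P => u hu; exists u; last by rewrite -hu fsetD1K.
have hue : u \in e `\ v by rewrite hu inE.
move: hue; rewrite inE => /andP [huv hue].
rewrite !inE (edge_vert he hue) /adj /=.
by have -> : [fset u; v] = e by rewrite fsetUC -hu fsetD1K.
Qed.

Lemma gV_delst (H : graph) v u :
  (u \in gV (delst H v)) = [&& u != v, u \notin nbr H v & u \in gV H].
Proof.
rewrite /delst gV_ind /stset !inE; case: (u \in gV H); rewrite ?andbF //=.
by rewrite !andbT negb_or.
Qed.

Lemma gE_delst (H : graph) v e : (e \in gE (delst H v)) =
  (e \in gE H) && [forall w : e, (val w != v) && (val w \notin nbr H v)].
Proof.
rewrite /delst gE_ind; case he: (e \in gE H) => //=.
apply/fsubsetP/forallP => [h w|h w hw].
  by have := h _ (fsvalP w); rewrite /stset in_fsetD in_fsetU in_fset1 negb_or => /andP [/andP [-> ->] _].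
have /andP [h1 h2] := h (FSetSub hw); rewrite /stset in_fsetD in_fsetU in_fset1 negb_or.
by rewrite h1 h2 (edge_vert he hw).
Qed.

Lemma card_delst (H : graph) v : v \in gV H ->
  (#|` gV (delst H v)| + #|` nbr H v| + 1)%N = #|` gV H|.
Proof.
move=> hv; have -> : gV (delst H v) = gV H `\` (v |` nbr H v).
  by apply/fsetP => u; rewrite gV_delst !inE negb_or andbA.
have hs : v |` nbr H v `<=` gV H.
  apply/fsubsetP => u; rewrite !inE => /orP [/eqP -> //| /andP [] //].
rewrite cardfsDS // cardfsU1.
have hn : v \notin nbr H v by apply/negP => /(fsubsetP (nbr_sub H v)); rewrite !inE eqxx.
rewrite hn; move: (fsubset_leq_card hs); rewrite cardfsU1 hn /= add1n; lia.
Qed.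

Lemma isol_edge (H : graph) e u : e \in gE H -> u \in e -> u \notin isol H.
Proof.
move=> he hu; rewrite !inE negb_and; apply/orP; right; rewrite negbK.
by apply/hasP; exists e.
Qed.

Lemma gE_ovl (H : graph) : gE (ovl H) = gE H.
Proof.
apply/fsetP => e; rewrite /ovl gE_ind; case he: (e \in gE H) => //=.
apply/fsubsetP => u hu; rewrite !inE (edge_vert he hu) andbT.
by rewrite andTb negbK; apply/hasP; exists e.
Qed.

Lemma card_ovl (H : graph) : (#|` gV (ovl H)| + #|` isol H|)%N = #|` gV H|.
Proof.
have -> : gV (ovl H) = gV H `\` isol H.
  by apply/fsetP => u; rewrite /ovl gV_ind in_fsetD; case: (u \in gV H); rewrite ?andbT ?andbF.
rewrite cardfsDS ?subnK //; last by apply/fsubsetP => u; rewrite !inE => /andP [].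
by apply: fsubset_leq_card; apply/fsubsetP => u; rewrite !inE => /andP [].
Qed.

End SubPart3.
Import SubPart3.

Module SubPart4.
Import GRing.Theory.
Local Open Scope fset_scope.
Local Open Scope ring_scope.

Section IdealInd.
Variable S : comNzRingType.
Lemma in_ideal_ind (gs : seq S) (K : S -> Prop) y :
  K 0%R -> (forall a b, K a -> K b -> K (a + b)%R) -> (forall c a, K a -> K (c * a)%R) ->
  (forall g, g \in gs -> K g) -> in_ideal gs y -> K y.
Proof.
move=> h0 hD hM hg [c ->]; elim/big_ind: _ => // i _.
by apply: hM; apply: hg; apply: mem_nth.
Qed.

Lemma in_ideal_ind' (gs : seq S) (K : S -> Prop) :
  K 0%R -> (forall a b, K a -> K b -> K (a + b)%R) -> (forall c a, K a -> K (c * a)%R) ->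
  (forall g, g \in gs -> K g) -> forall y, in_ideal gs y -> K y.
Proof. by move=> h0 hD hM hg y; apply: in_ideal_ind. Qed.

Lemma in_ideal_mulsub (gs hs : seq S) x b :
  (forall g, g \in hs -> in_ideal gs (x * g)%R) -> in_ideal hs b -> in_ideal gs (x * b)%R.
Proof.
move=> h; apply: (in_ideal_ind (K := fun b => in_ideal gs (x * b)%R)).
- by rewrite mulr0; apply: in_ideal0.
- by move=> a1 a2 h1 h2; rewrite mulrDr; apply: in_idealD.
- by move=> c a ha; rewrite mulrCA; apply: in_idealM.
exact: h.
Qed.
End IdealInd.

Section Graph.
Variables (k : fieldType) (N : nat) (phi : nat -> nat).
Local Notation S := {mpoly k[N]}.
Local Notation pg := (pgens k N phi).
Local Notation vr u := (var k N (phi u)).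

Definition vgens (H : graph) : seq (seq nat) := [seq enum_fset e | e <- enum_fset (gE H)].
Definition vlist (us : seq nat) : seq (seq nat) := [seq [:: u] | u <- us].
Definition pe (e : {fset nat}) : S := (\prod_(u <- enum_fset e) vr u)%R.

Lemma pg_vgens H : pg (vgens H) = [seq pe e | e <- enum_fset (gE H)].
Proof. by rewrite /pgens /vgens -map_comp. Qed.

Lemma pg_vlist us : pg (vlist us) = [seq vr u | u <- us].
Proof. by rewrite /pgens /vlist -map_comp; apply: eq_map => u /=; rewrite big_seq1. Qed.

Lemma pg_cat a b : pg (a ++ b) = pg a ++ pg b.
Proof. exact: map_cat. Qed.

Lemma pe_gen H e : e \in gE H -> pe e \in pg (vgens H).
Proof. by move=> he; rewrite pg_vgens; apply: map_f. Qed.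

Lemma pe2 v u : u != v -> pe [fset v; u] = (vr v * vr u)%R.
Proof.
move=> huv; rewrite /pe big_fsetU1 ?inE 1?eq_sym //=.
by rewrite big_seq_fset1.
Qed.

Lemma edge_pe H v e : e \in gE H -> v \in e ->
  exists2 u, u \in nbr H v & pe e = (vr v * vr u)%R.
Proof.
move=> he hv; case: (edge_nbr he hv) => u hu ->; exists u => //.
apply: pe2; move: hu; rewrite !inE => /andP [_ /adj_neq] //.
Qed.

Lemma gen_var us u : u \in us -> forall ss, vr u \in pg (ss ++ vlist us).
Proof. by move=> hu ss; rewrite pg_cat mem_cat pg_vlist (map_f (fun u => vr u)) ?orbT. Qed.

Lemma idl_split H v y :
  in_ideal (pg (vgens H)) y <->
  exists a b, in_ideal (pg (vgens (delv H v))) a /\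
    in_ideal (pg (vgens (delv H v) ++ vlist (enum_fset (nbr H v)))) b /\
    y = a + vr v * b.
Proof.
split; last first.
  case=> a [b [ha [hb ->]]]; apply: in_idealD.
    apply: (in_ideal_sub _ ha) => g; rewrite pg_vgens => /mapP [e he ->].
    by apply: in_ideal_gen; apply: pe_gen; move: he; rewrite gE_delv => /andP [].
  apply: (in_ideal_mulsub _ hb) => g; rewrite pg_cat mem_cat => /orP [].
    rewrite pg_vgens => /mapP [e he ->]; apply: in_idealM; apply: in_ideal_gen.
    by apply: pe_gen; move: he; rewrite gE_delv => /andP [].
  rewrite pg_vlist => /mapP [u hu ->]; rewrite -pe2; last first.
    by move: hu; rewrite !inE => /andP [_ /adj_neq].
  by apply: in_ideal_gen; apply: pe_gen; apply: nbr_edge.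
move: y; apply: in_ideal_ind'.
  - by exists 0, 0; rewrite mulr0 addr0; split; [|split] => //; apply: in_ideal0.
  - move=> y1 y2 [a1 [b1 [h1 [h1' ->]]]] [a2 [b2 [h2 [h2' ->]]]].
    exists (a1 + a2), (b1 + b2); split; first exact: in_idealD.
    split; first exact: in_idealD.
    by rewrite mulrDr addrACA.
  - move=> c y1 [a1 [b1 [h1 [h1' ->]]]]; exists (c * a1), (c * b1).
    split; first exact: in_idealM.
    split; first exact: in_idealM.
    by rewrite mulrDr mulrCA.
  move=> g; rewrite pg_vgens => /mapP [e he ->]; case: (boolP (v \in e)) => hv.
    case: (edge_pe he hv) => u hu ->; exists 0, (vr u); split; first exact: in_ideal0.
    by split; [apply: in_ideal_gen; apply: gen_var | rewrite add0r].
  exists (pe e), 0; split; last by split; [apply: in_ideal0 | rewrite mulr0 addr0].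
  by apply: in_ideal_gen; apply: pe_gen; rewrite gE_delv he.
Qed.

Lemma idl_st H v y :
  in_ideal (pg (vgens (delv H v) ++ vlist (enum_fset (nbr H v)))) y <->
  in_ideal (pg (vgens (delst H v) ++ vlist (enum_fset (nbr H v)))) y.
Proof.
split; apply: in_ideal_sub => g; rewrite [in X in X -> _]pg_cat mem_cat => /orP [|];
  last first; try by rewrite pg_vlist => /mapP [u hu ->]; apply: in_ideal_gen; apply: gen_var.
- rewrite pg_vgens => /mapP [e he ->]; apply: in_ideal_gen; rewrite pg_cat mem_cat.
  apply/orP; left; apply: pe_gen; move: he; rewrite gE_delst gE_delv => /andP [-> /forallP h].
  by apply/negP => hv; have := h (FSetSub hv); rewrite eqxx.
rewrite pg_vgens => /mapP [e he ->].
case hst: (e \in gE (delst H v)).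
  by apply: in_ideal_gen; rewrite pg_cat mem_cat; apply/orP; left; apply: pe_gen.
move: he; rewrite gE_delv => /andP [he hv]; move: hst; rewrite gE_delst he /=.
move/negbT/forallPn => [w]; rewrite negb_and !negbK => /orP [/eqP hw|hw].
  by move: hv; rewrite -hw (fsvalP w).
case: (edge_pe he (fsvalP w)) => u _ ->; apply: in_idealMr; apply: in_ideal_gen.
exact: gen_var.
Qed.
End Graph.

Lemma vgensP (H : graph) (s : seq nat) : s \in vgens H -> exists2 e, e \in gE H & s = enum_fset e.
Proof. move=> hs; exact: (@mapP _ _ (fun e : {fset nat} => enum_fset e) (enum_fset (gE H)) s hs). Qed.

Lemma vgens_vert (G : graph) (s : seq nat) w : s \in vgens G -> w \in s -> w \in gV G.
Proof. by move=> /vgensP [e he ->]; apply: edge_vert. Qed.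

End SubPart4.
Import SubPart4.

Module SubPart5.
Import GRing.Theory.

Lemma INR_eq (a b : nat) : a = b -> INR a = INR b.
Proof. by move=> ->. Qed.

Section Main.
Variables (k : fieldType) (C : graph -> Prop) (f : graph -> R).
Hypothesis hC : hereditary C.
Hypothesis h1 : forall G : graph, C G -> gE G = fset0 -> Rle (f G) (INR #|` gV G|).
Hypothesis h2 : forall G : graph, C G -> gE G != fset0 ->
     exists vs : seq nat,
       [/\ vs != [::], uniq vs, all (fun v => v \in gV G) vs,
           (forall i : nat, (i < size vs)%N ->
              Rge (Rplus (f (delst (delseq G (take i vs)) (nth 0%N vs i))) 1)
                  (f G))
         & Rge (Rplus (f (ovl (delseq G vs))) (INR #|` isol (delseq G vs)|))
               (f G)].

Lemma main_claim n : forall H : graph, (#|` gV H| < n)%N -> C H ->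
  forall N (phi : nat -> nat), (forall u, u \in gV H -> (phi u < N)%N) ->
  {in gV H &, injective phi} ->
  exists p, fres (in_ideal (pgens k N phi (vgens H))) p /\
            Rle (INR p) (Rminus (INR #|` gV H|) (f H)).
Proof.
elim: n => [|n IH] H hn hCH N phi hN hinj; first by [].
case: (eqVneq (gE H) fset0) => hE.
  exists 0%N; split.
    apply: fres_ext (fres_zero _) => y; rewrite /vgens hE.
    have -> : enum_fset (fset0 : {fset {fset nat}}) = [::] by apply/eqP; rewrite -size_eq0 cardfs0.
    by split => [->|/in_ideal_nil //]; apply: in_ideal0.
  by have := h1 hCH hE; simpl INR; lra.
have [vs [hne huq hall h2' h3']] := h2 hCH hE.
pose kk := size vs.
have hkk : (0 < kk)%N by rewrite lt0n size_eq0.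
pose Gi i := delseq H (take i vs).
have hsub : forall i u, u \in gV (Gi i) -> u \in gV H.
  by move=> i u; rewrite gV_delseq => /andP [].
have hCi : forall i, C (Gi i) by move=> i; apply: hered_delseq.
have hcard : forall i, (i <= kk)%N -> (#|` gV (Gi i)| + i)%N = #|` gV H|.
  move=> i hi; rewrite -{2}(size_takel hi) card_delseq //; first exact: take_uniq.
  by apply/allP => u /mem_take hu; apply: (allP hall).
have hVn : (#|` gV H| <= n)%N by [].
have claim : forall j, (j <= kk)%N -> exists p,
    fres (in_ideal (pgens k N phi (vgens (Gi (kk - j))))) p /\
    Rle (Rplus (INR p) (INR (kk - j))) (Rminus (INR #|` gV H|) (f H)).
  elim=> [|j IHj] hj.
    rewrite subn0; set Gk := Gi kk.
    have hGk : Gk = delseq H vs by rewrite /Gk /Gi take_size.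
    have hck := hcard kk (leqnn _); have hco := card_ovl Gk.
    have [p [hf hp]] : exists p, fres (in_ideal (pgens k N phi (vgens (ovl Gk)))) p /\
            Rle (INR p) (Rminus (INR #|` gV (ovl Gk)|) (f (ovl Gk))).
      apply: IH; first (rewrite -/Gk in hck; lia).
      - by rewrite /ovl; apply: hered_ind => //; apply: hCi.
      - by move=> u /(fsubsetP (gV_sub _ _)) /hsub /hN.
      - move=> u w /(fsubsetP (gV_sub _ _)) /hsub hu /(fsubsetP (gV_sub _ _)) /hsub hw.
        exact: hinj.
    exists p; split; first by move: hf; rewrite /vgens gE_ovl.
    move: h3'; rewrite -hGk => h3'.
    rewrite -/Gk in hck; have e1 := INR_eq hck; have e2 := INR_eq hco; rewrite !plus_INR in e1 e2; lra.
  have hjk : (j < kk)%N by [].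
  have [p1 [hf1 hp1]] := IHj (ltnW hj).
  set i := (kk - j.+1)%N.
  have hi1 : (kk - j)%N = i.+1 by rewrite /i subnSK.
  have hik : (i < size vs)%N by rewrite /i; lia.
  set v := nth 0%N vs i.
  have hGS : Gi i.+1 = delv (Gi i) v by rewrite /Gi (take_nth 0%N hik) /delseq foldl_rcons.
  rewrite hi1 hGS in hf1 hp1.
  set Hi := Gi i.
  have hvHi : v \in gV Hi.
    rewrite gV_delseq (allP hall v (mem_nth _ hik)) andbT.
    have : uniq (take i vs ++ drop i vs) by rewrite cat_take_drop.
    rewrite (drop_nth 0%N hik) cat_uniq.
    by case/and3P => _ /hasPn /(_ v (mem_head _ _)).
  have hvH : v \in gV H by apply: hsub hvHi.
  have hcst := card_delst hvHi.
  have hci := hcard i (ltnW hik).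
  have hsubst : forall u, u \in gV (delst Hi v) -> u \in gV H.
    by move=> u /(fsubsetP (gV_sub _ _)) /hsub.
  have [p2 [hf2 hp2]] : exists p, fres (in_ideal (pgens k N phi (vgens (delst Hi v)))) p /\
          Rle (INR p) (Rminus (INR #|` gV (delst Hi v)|) (f (delst Hi v))).
    apply: IH; first by rewrite -/Hi in hci; lia.
    - by rewrite /delst; apply: hered_ind => //; apply: hCi.
    - by move=> u /hsubst /hN.
    - by move=> u w /hsubst hu /hsubst hw; apply: hinj.
  have hnbrH : forall u, u \in nbr Hi v -> u \in gV H.
    by move=> u; rewrite !inE => /andP [/hsub].
  have hf2' := add_vars (us := enum_fset (nbr Hi v)) (ss := vgens (delst Hi v)) (phi := phi) (k := k)
    (fun s w hs hw => hN _ (hsubst _ (vgens_vert hs hw)))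
    (fun u hu => hN _ (hnbrH _ hu)) _ _ hf2.
  have hf2'' : fres (in_ideal (pgens k N phi
      (vgens (delv Hi v) ++ vlist (enum_fset (nbr Hi v))))) (p2 + #|` nbr Hi v|).
    apply: fres_ext; last apply: hf2'.
    - by move=> y; rewrite idl_st.
    - move=> s w u hs hw hu; apply/negP => /eqP /hinj.
      move=> /(_ (hsubst _ (vgens_vert hs hw)) (hnbrH _ hu)) ewu.
      by move: (vgens_vert hs hw); rewrite gV_delst ewu hu andbF.
    - rewrite map_inj_in_uniq ?fset_uniq // => u w hu hw; apply: hinj; exact: hnbrH.
  have hx : var k N (phi v) != 0%R by apply: var_neq0; apply: hN.
  have hcone := cone_fres hx _ _ (fun y => @idl_split k N phi Hi v y) hf1 hf2''.
  have hfin : fres (in_ideal (pgens k N phi (vgens Hi))) (maxn p1.+1 (p2 + #|` nbr Hi v|)).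
    apply: hcone.
    - move=> y; apply: in_ideal_sub => g hg; apply: in_ideal_gen.
      by rewrite pg_cat mem_cat hg.
    - move=> y; apply: prod_regular => //.
      + by move=> s w hs hw; apply: hN; apply: hsub; apply: (fsubsetP (gV_sub _ _)); apply: vgens_vert hs hw.
      + exact: hN.
      + move=> s w hs hw; apply/negP => /eqP e.
        have hw' := vgens_vert hs hw.
        have := hinj _ _ (hsub _ _ (fsubsetP (gV_sub _ _) _ hw')) hvH e.
        by move=> ewv; move: hw'; rewrite gV_delv ewv eqxx.
  exists (maxn p1.+1 (p2 + #|` nbr Hi v|)); split => //.
  rewrite -/Hi in hci.
  have e1 := INR_eq hcst; have e2 := INR_eq hci; rewrite !plus_INR in e1 e2.
  have hh : Rge (Rplus (f (delst Hi v)) 1) (f H) := h2' i hik.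
  rewrite S_INR in hp1.
  case: (leqP p1.+1 (p2 + #|` nbr Hi v|)) => hm.
    rewrite plus_INR; rewrite (_ : INR 1 = R1) // in e1; lra.
  rewrite S_INR; lra.
have [p [hf hp]] := claim kk (leqnn _).
exists p; split; first by move: hf; rewrite subnn /Gi take0.
by move: hp; rewrite subnn; simpl INR; lra.
Qed.
End Main.

End SubPart5.
Import SubPart5.

Theorem theorem3p1 (k : fieldType) (C : graph -> Prop) (f : graph -> R) :
  hereditary C ->
  (* (1) *)
  (forall G : graph, C G -> gE G = fset0 ->
     Rle (f G) (INR #|` gV G|)) ->
  (forall G : graph, C G -> gE G != fset0 ->
     exists vs : seq nat,
       [/\ vs != [::], uniq vs, all (fun v => v \in gV G) vs,
           (* (2) *)
           (forall i : nat, (i < size vs)%N ->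
              Rge (Rplus (f (delst (delseq G (take i vs)) (nth 0%N vs i))) 1)
                  (f G))
         & (* (3) *)
           Rge (Rplus (f (ovl (delseq G vs))) (INR #|` isol (delseq G vs)|))
               (f G)]) ->
  forall G : graph, C G ->
    pd_le k G (Rminus (INR #|` gV G|) (f G)).
Proof.
move=> hC h1 h2 G hG.
have := @main_claim k C f hC h1 h2 (#|` gV G|).+1 G (leqnn _) hG (nvars G)
  (fun u => index u (enum_fset (gV G))).
case.
- by move=> u hu; rewrite /nvars index_mem.
- by move=> u w hu hw e; rewrite -(nth_index 0%N hu) -(nth_index 0%N hw) e.
move=> p [hf hp]; exists p; split => //; apply/fresE.
by move: hf; rewrite /pgens /vgens -map_comp.
Qed.
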